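(* The price of anarchy (supremum over all weights $w_1,w_2\ge0$ with $w_1+w_2>0$ and all instances, with respect to subgame-perfect equilibria) for sequential two-player weighted congestion games with affine costs and uniform cost functions is equal to $2$.
   Context: A weighted two-player congestion game with affine costs consists of a finite set $R$ of resources, coefficients $\alpha_r,\beta_r \geq 0$ for each $r\in R$, two players $i=1,2$ with weights $w_i\ge 0$, and for each player $i$ a nonempty finite set $\mathcal{A}_i \subseteq 2^R$ of actions. For an action profile $A=(A_1,A_2)$ the load of $r$ is $x_r(A)=\sum_{j:\, r\in A_j} w_j$. With uniform costs, player $i$ pays $C_i(A)=\sum_{r\in A_i}(\alpha_r+\beta_r x_r(A))$. The social cost is $C(A)=C_1(A)+C_2(A)$. In the sequential game, player 1 chooses $A_1$ first, then player 2, knowing $A_1$, chooses $A_2$. A subgame-perfect equilibrium consists of a function $A_1\mapsto A_2^*(A_1)$ with $C_2(A_1,A_2^*(A_1))\le C_2(A_1,A_2)$ for all $A_1,A_2$, and an action $A_1^*$ with $C_1(A_1^*,A_2^*(A_1^* ))\le C_1(A_1,A_2^*(A_1))$ for all $A_1$; its outcome is $(A_1^*,A_2^*(A_1^* ))$. The price of anarchy of an instance is the maximum over subgame-perfect equilibrium outcomes $A$ of $C(A)/\min_{A'}C(A')$; the price of anarchy of a class is the supremum over all instances (with positive optimal social cost). *)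

(* Defs.v *)
From HB Require Import structures.
From mathcomp Require Import all_boot all_order all_algebra.
From mathcomp Require Import reals.
Set Implicit Arguments. Unset Strict Implicit. Unset Printing Implicit Defensive.
Import Order.TTheory GRing.Theory Num.Theory.
Local Open Scope ring_scope.

Section Game.
Variables (F : realType) (T : finType).
Variables (alpha beta : T -> F) (w1 w2 : F).

Definition load (A1 A2 : {set T}) (r : T) : F :=
  (if r \in A1 then w1 else 0) + (if r \in A2 then w2 else 0).

Definition cost1 (A1 A2 : {set T}) : F :=
  \sum_(r in A1) (alpha r + beta r * load A1 A2 r).
Definition cost2 (A1 A2 : {set T}) : F :=
  \sum_(r in A2) (alpha r + beta r * load A1 A2 r).
Definition social (A1 A2 : {set T}) : F := cost1 A1 A2 + cost2 A1 A2.

Definition valid_instance (S1 S2 : {set {set T}}) : Prop :=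
  [/\ forall r, 0 <= alpha r, forall r, 0 <= beta r,
      0 <= w1, 0 <= w2 & 0 < w1 + w2] /\ S1 != set0 /\ S2 != set0.

(* (f, a1) is a subgame-perfect equilibrium of the sequential game
   (player 1 moves first, player 2 responds via the strategy f);
   its outcome is (a1, f a1). *)
Definition is_SPE (S1 S2 : {set {set T}}) (f : {set T} -> {set T})
    (a1 : {set T}) : Prop :=
  [/\ a1 \in S1,
      forall B1, B1 \in S1 -> f B1 \in S2 /\
        (forall B2, B2 \in S2 -> cost2 B1 (f B1) <= cost2 B1 B2)
    & forall B1, B1 \in S1 -> cost1 a1 (f a1) <= cost1 B1 (f B1)].

Definition pos_opt (S1 S2 : {set {set T}}) : Prop :=
  forall B1 B2, B1 \in S1 -> B2 \in S2 -> 0 < social B1 B2.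

End Game.

(* Main.v *)
Require Import Defs.
From HB Require Import structures.
From mathcomp Require Import all_boot all_order all_algebra.
From mathcomp Require Import reals.
From mathcomp Require Import ring lra.
Import Order.TTheory GRing.Theory Num.Theory.
Local Open Scope ring_scope.

Ltac hints w1 w2 a b h1 q0 d0 ha hb :=
    have p1 := mulr_ge0 h1 ha; have p2 := mulr_ge0 h1 hb;
    have p3 := mulr_ge0 q0 ha; have p4 := mulr_ge0 q0 hb;
    have p5 := mulr_ge0 d0 ha; have p6 := mulr_ge0 d0 hb;
    have p7 := mulr_ge0 p2 h1; have p8 := mulr_ge0 p2 q0; have p9 := mulr_ge0 p4 q0;
    have p10 := mulr_ge0 p6 h1; have p11 := mulr_ge0 p6 q0; have p12 := mulr_ge0 p5 h1.
Lemma cost1E (F : realType) (T : finType) (alpha beta : T -> F) (w1 w2 : F) A1 A2 :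
  cost1 alpha beta w1 w2 A1 A2 = \sum_r (if r \in A1 then alpha r + beta r * load w1 w2 A1 A2 r else 0).
Proof. by rewrite /cost1 big_mkcond. Qed.
Lemma cost2E (F : realType) (T : finType) (alpha beta : T -> F) (w1 w2 : F) A1 A2 :
  cost2 alpha beta w1 w2 A1 A2 = \sum_r (if r \in A2 then alpha r + beta r * load w1 w2 A1 A2 r else 0).
Proof. by rewrite /cost2 big_mkcond. Qed.

Lemma key1 (F : realType) (T : finType) (alpha beta : T -> F) (w1 w2 : F)
  (a1 a2 B1 g B2 : {set T}) :
  (forall r, 0 <= alpha r) -> (forall r, 0 <= beta r) -> 0 <= w1 -> w1 <= w2 ->
  w2 * (cost1 alpha beta w1 w2 B1 g + cost2 alpha beta w1 w2 a1 B2)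
   + (w2 - w1) * cost2 alpha beta w1 w2 B1 B2 <=
  2 * w2 * (cost1 alpha beta w1 w2 B1 B2 + cost2 alpha beta w1 w2 B1 B2)
   + (w2 - w1) * cost2 alpha beta w1 w2 B1 g.
Proof.
move=> ha hb h1 h12.
rewrite !cost1E !cost2E !mulrDr !mulr_sumr -!big_split /=.
apply: ler_sum => r _; rewrite /load.
have ha' := ha r; have hb' := hb r.
have q0 : 0 <= w2 by apply: le_trans h12.
have d0 : 0 <= w2 - w1 by rewrite subr_ge0.
hints w1 w2 (alpha r) (beta r) h1 q0 d0 ha' hb'.
case: (r \in a1); case: (r \in B1); case: (r \in g); case: (r \in B2) => /=; nra.
Qed.

Lemma key2 (F : realType) (T : finType) (alpha beta : T -> F) (w1 w2 : F)
  (a1 a2 B1 g B2 : {set T}) :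
  (forall r, 0 <= alpha r) -> (forall r, 0 <= beta r) -> 0 <= w2 -> w2 <= w1 ->
  2 * cost1 alpha beta w1 w2 B1 g + cost2 alpha beta w1 w2 a1 B2
   + cost2 alpha beta w1 w2 B1 B2 <=
  2 * (cost1 alpha beta w1 w2 B1 B2 + cost2 alpha beta w1 w2 B1 B2)
   + cost1 alpha beta w1 w2 a1 a2 + cost2 alpha beta w1 w2 B1 g.
Proof.
move=> ha hb h1 h12.
rewrite !cost1E !cost2E !mulrDr !mulr_sumr -!big_split /=.
apply: ler_sum => r _; rewrite /load.
have ha' := ha r; have hb' := hb r.
have q0 : 0 <= w1 by apply: le_trans h12.
have d0 : 0 <= w1 - w2 by rewrite subr_ge0.
hints w2 w1 (alpha r) (beta r) h1 q0 d0 ha' hb'.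
case: (r \in a1); case: (r \in a2); case: (r \in B1); case: (r \in g); case: (r \in B2) => /=; nra.
Qed.

Lemma c1s (F : realType) (T : finType) (alpha beta : T -> F) (w1 w2 : F) (a b : T) :
  cost1 alpha beta w1 w2 [set a] [set b] = alpha a + beta a * (w1 + (if a == b then w2 else 0)).
Proof. by rewrite /cost1 big_set1 /load !in_set1 eqxx. Qed.
Lemma c2s (F : realType) (T : finType) (alpha beta : T -> F) (w1 w2 : F) (a b : T) :
  cost2 alpha beta w1 w2 [set a] [set b] = alpha b + beta b * ((if b == a then w1 else 0) + w2).
Proof. by rewrite /cost2 big_set1 /load !in_set1 eqxx. Qed.

Lemma tight (F : realType) (eps : F) : 0 < eps ->
    exists (T : finType) (alpha beta : T -> F) (w1 w2 : F)
           (S1 S2 : {set {set T}}) (f : {set T} -> {set T}) (a1 : {set T}),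
      [/\ valid_instance alpha beta w1 w2 S1 S2,
          pos_opt alpha beta w1 w2 S1 S2,
          is_SPE alpha beta w1 w2 S1 S2 f a1 &
          exists B1 B2, [/\ B1 \in S1, B2 \in S2 &
            (2 - eps) * social alpha beta w1 w2 B1 B2 <
              social alpha beta w1 w2 a1 (f a1)]].
Proof.
move=> heps.
pose x3 : 'I_3 := @Ordinal 3 0 isT.
pose y3 : 'I_3 := @Ordinal 3 1 isT.
pose z3 : 'I_3 := @Ordinal 3 2 isT.
pose alpha := fun r : 'I_3 => (if r == z3 then 1 else 0) : F.
pose beta := fun r : 'I_3 => (if r == z3 then 0 else 1) : F.
exists 'I_3, alpha, beta, 1, 0, [set [set x3]; [set y3]], [set [set x3]; [set z3]],
  (fun _ => [set x3]), [set x3].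
have ne : forall (A B : {set 'I_3}), [set A; B] != set0.
  by move=> A B; apply/set0Pn; exists A; rewrite !inE eqxx.
split.
- split; last by split; apply: ne.
  split => //; try lra; move=> r; rewrite /alpha /beta; case: (r == z3) => //; lra.
- move=> B1 B2 /set2P [->|->] /set2P [->|->];
    rewrite /social c1s c2s /alpha /beta /=; lra.
- split; first by rewrite !inE eqxx.
  + move=> B1 /set2P [->|->]; (split; first by rewrite !inE eqxx ?orbT);
      move=> B2 /set2P [->|->]; rewrite !c2s /alpha /beta /=; lra.
  + move=> B1 /set2P [->|->]; rewrite /= !c1s /alpha /beta /=; lra.
- exists [set y3], [set x3]; split; try by rewrite !inE eqxx ?orbT.
  rewrite /social /= !c1s !c2s /alpha /beta /=; lra.
Qed.

Theorem corollary5 (F : realType) :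
  (* upper bound: every SPE outcome costs at most 2 * OPT *)
  (forall (T : finType) (alpha beta : T -> F) (w1 w2 : F)
          (S1 S2 : {set {set T}}) (f : {set T} -> {set T}) (a1 : {set T}),
      valid_instance alpha beta w1 w2 S1 S2 ->
      pos_opt alpha beta w1 w2 S1 S2 ->
      is_SPE alpha beta w1 w2 S1 S2 f a1 ->
      forall B1 B2, B1 \in S1 -> B2 \in S2 ->
        social alpha beta w1 w2 a1 (f a1) <= 2 * social alpha beta w1 w2 B1 B2)
  /\
  (* tightness: the ratio 2 is approached arbitrarily closely *)
  (forall eps : F, 0 < eps ->
    exists (T : finType) (alpha beta : T -> F) (w1 w2 : F)
           (S1 S2 : {set {set T}}) (f : {set T} -> {set T}) (a1 : {set T}),
      [/\ valid_instance alpha beta w1 w2 S1 S2,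
          pos_opt alpha beta w1 w2 S1 S2,
          is_SPE alpha beta w1 w2 S1 S2 f a1 &
          exists B1 B2, [/\ B1 \in S1, B2 \in S2 &
            (2 - eps) * social alpha beta w1 w2 B1 B2 <
              social alpha beta w1 w2 a1 (f a1)]]).
Proof.
split.
  move=> T alpha beta w1 w2 S1 S2 f a1 [[ha hb h1 h2 h12] _] _ [a1S hf hopt] B1 B2 B1S B2S.
  have [fB1S /(_ _ B2S) H3] := hf _ B1S.
  have [_ /(_ _ B2S) H2] := hf _ a1S.
  have H1 := hopt _ B1S.
  rewrite /social.
  case: (leP w1 w2) => hw.
  - have K := @key1 F T alpha beta w1 w2 a1 (f a1) B1 (f B1) B2 ha hb h1 hw.
    have q0 : 0 < w2 by lra.
    have d0 : 0 <= w2 - w1 by rewrite subr_ge0.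
    rewrite -(ler_pM2l q0).
    have := ler_wpM2l (ltW q0) H1; have := ler_wpM2l (ltW q0) H2;
    have := ler_wpM2l d0 H3.
    nra.
  - have K := @key2 F T alpha beta w1 w2 a1 (f a1) B1 (f B1) B2 ha hb h2 (ltW hw).
    lra.
exact: tight.
Qed.
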